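(* Let $G$ be a compact abelian group with discrete dual group $\Gamma$ and let $a, b \in \mathbb{N}$ be coprime. A subset $E \subset \Gamma$ is $(ab)$-PR if and only if $E$ is both $a$-PR and $b$-PR.
   Context: Characters are written multiplicatively; $\mathbb{Z}_N$ is identified with the $N$-th roots of unity in the unit circle $\mathbb{T}$. For $N \in \mathbb{N}$, a subset $E \subset \Gamma$ is $N$-PR if for every function $\varphi: E \to \mathbb{Z}_N$ there exists $x \in G$ with $\varphi(\gamma) = \gamma(x)$ for all $\gamma \in E$. *)

(* Defs.v *)
From HB Require Import structures.
From mathcomp Require Import all_boot all_order all_algebra.
From mathcomp Require Import all_classical all_reals all_analysis.
From mathcomp Require Import complex.
Import GRing.Theory Num.Theory numFieldNormedType.Exports.

Set Implicit Arguments.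

Unset Strict Implicit.
Unset Printing Implicit Defensive.

Local Open Scope ring_scope.
Local Open Scope classical_set_scope.

(* The complex numbers R[i] (R a real field), seen as a numFieldType so that
   they carry their canonical (modulus-)norm topology. *)
Definition CC (R : realType) : numFieldType := R[i].

Definition circle (R : realType) : set (CC R) := [set z | `|z| = 1].

(* Z_N identified with the N-th roots of unity in T. *)
Definition roots_of_unity (R : realType) (N : nat) : set (CC R) :=
  [set z | z ^+ N = 1].

Definition is_character (R : realType) (G : topologicalZmodType)
  (gam : G -> CC R) : Prop :=
  [/\ continuous gam,
      (forall x, @circle R (gam x)) &
      (forall x y, gam (x + y) = gam x * gam y)].

Definition dual (R : realType) (G : topologicalZmodType) : set (G -> CC R) :=
  [set gam | is_character gam].

Definition PR (R : realType) (G : topologicalZmodType) (N : nat)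
  (E : set (G -> CC R)) : Prop :=
  forall phi : (G -> CC R) -> CC R,
    (forall gam, E gam -> @roots_of_unity R N (phi gam)) ->
    exists x : G, forall gam, E gam -> phi gam = gam x.

(* Main.v *)
Require Import Defs.
From HB Require Import structures.
From mathcomp Require Import all_boot all_order all_algebra.
From mathcomp Require Import all_classical all_reals all_analysis.
From mathcomp Require Import complex.
Import GRing.Theory Num.Theory numFieldNormedType.Exports.
Local Open Scope classical_set_scope.

Lemma expr_modn (Rg : ringType) (x : Rg) (n m : nat) :
  (x ^+ n = 1)%R -> (x ^+ m = x ^+ (m %% n))%R.
Proof.
move=> xn; rewrite {1}(divn_eq m n) exprD mulnC exprM xn expr1n mul1r //.
Qed.

Arguments expr_modn {Rg x n} m.

Lemma PR_mono (R : realType) (G : topologicalZmodType) (n d : nat)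
  (E : set (G -> CC R)) : (d %| n)%N -> PR n E -> PR d E.
Proof.
move=> /dvdnP [k ->] H phi Hphi; apply: H => gam Eg.
rewrite /roots_of_unity /= mulnC exprM (Hphi gam Eg) expr1n //.
Qed.

Theorem corollary2p5 (R : realType) (G : topologicalZmodType)
  (Gcompact : compact [set: G]) (Ghaus : hausdorff_space G)
  (a b : nat) (a_pos : (0 < a)%N) (b_pos : (0 < b)%N) (ab_coprime : coprime a b)
  (E : set (G -> CC R)) (E_sub : E `<=` @dual R G) :
  PR (a * b)%N E <-> PR a E /\ PR b E.
Proof.
split.
  move=> H; split; [apply: (@PR_mono R G (a*b)%N _ E (dvdn_mulr _ (dvdnn a)) H) | apply: (@PR_mono R G (a*b)%N _ E (dvdn_mull _ (dvdnn b)) H)].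
move=> [Ha Hb] phi Hphi.
pose e1 := chinese a b 1 0; pose e2 := chinese a b 0 1.
have e1b : (b %| e1)%N by rewrite /dvdn /e1 chinese_modr // mod0n.
have e2a : (a %| e2)%N by rewrite /dvdn /e2 chinese_modl // mod0n.
have e12 : (e1 + e2 = 1 %[mod a * b])%N.
  apply/eqP; rewrite chinese_remainder //; apply/andP; split; apply/eqP.
    by rewrite -modnDm /e1 /e2 !chinese_modl // modnDm addn0.
  by rewrite -modnDm /e1 /e2 !chinese_modr // modnDm.
clearbody e1 e2.
have H1 : forall g, E g -> @roots_of_unity R a (phi g ^+ e1)%R.
  move=> g Eg; rewrite /roots_of_unity /= -exprM (expr_modn _ (Hphi g Eg)).
  have /eqP -> : (a * b %| e1 * a)%N by rewrite [(a * b)%N]mulnC dvdn_pmul2r.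
  by rewrite expr0.
have H2 : forall g, E g -> @roots_of_unity R b (phi g ^+ e2)%R.
  move=> g Eg; rewrite /roots_of_unity /= -exprM (expr_modn _ (Hphi g Eg)).
  have /eqP -> : (a * b %| e2 * b)%N by rewrite dvdn_pmul2r.
  by rewrite expr0.
have [x1 Hx1] := Ha _ H1.
have [x2 Hx2] := Hb _ H2.
exists (x1 + x2)%R => gam Eg.
have [_ _ Hm] := E_sub gam Eg.
rewrite Hm -Hx1 // -Hx2 // -exprD (expr_modn _ (Hphi gam Eg)) e12.
by rewrite -(expr_modn _ (Hphi gam Eg)) expr1.
Qed.
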